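(* Let $L$ be a finite lattice, let $b\in L$, and let $A\subseteq L$ be a nonempty subset such that $b\not\le a$ for every $a\in A$. If $\tilde A$ is a maximal $b$-meet antichain of $A$, then $\nabla_A^b\varphi=\nabla_{\tilde A}^b\varphi$ for every $\varphi\in R(L)$.
   Context: $L$ is a finite lattice with order $\le$, meet $\wedge$ and maximum $\hat1$; $R(L)$ is the space of real-valued functions on $L$. For $A'\subseteq L$, $\bigwedge A'$ is the meet of $A'$, with $\bigwedge\emptyset=\hat1$. For a finite $A\subseteq L$ and $b\in L$, $\nabla_A^b\varphi=\sum_{A'\subseteq A}(-1)^{|A'|}\varphi(\bigwedge A'\wedge b)$ (for nonempty $A=\{a_1,\dots,a_n\}$ this is $\nabla_{a_1,\ldots,a_n}\varphi(b)$ with $\nabla_a\varphi(x)=\varphi(x)-\varphi(x\wedge a)$ iterated). An $n$-element subset $\{a_1,\dots,a_n\}$ is a $b$-meet antichain if $\{a_1\wedge b,\dots,a_n\wedge b\}$ is an $n$-element antichain; a singleton $\{a\}$ is a $b$-meet antichain only when $b\not\le a$. A maximal $b$-meet antichain of $A$ is a subset $\tilde A\subseteq A$ such that (i) $\tilde A$ is a $b$-meet antichain and (ii) for every $a\in A$ there is $a'\in\tilde A$ with $a\wedge b\le a'\wedge b$. *)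

(* Defs.v *)
From HB Require Import structures.
From mathcomp Require Import all_boot all_order all_algebra.
From mathcomp Require Import reals.
Set Implicit Arguments. Unset Strict Implicit. Unset Printing Implicit Defensive.
Import Order.TTheory GRing.Theory Num.Theory.

Local Open Scope order_scope.

(* Meet of a subset; the meet of the empty set is the top element \top. *)
Definition bigmeet d (L : finTBLatticeType d) (A' : {set L}) : L :=
  \meet_(x in A') x.

Definition nabla d (L : finTBLatticeType d) (R : pzRingType)
  (A : {set L}) (b : L) (phi : L -> R) : R :=
  (\sum_(A' in powerset A) (-1) ^+ #|A'| * phi (bigmeet A' `&` b))%R.

Definition meet_antichain d (L : finTBLatticeType d) (b : L) (S : {set L}) :=
  [/\ #|[set a `&` b | a in S]| = #|S|,
      (forall x y, x \in S -> y \in S -> x `&` b <= y `&` b -> x = y)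
    & (#|S| = 1%N -> forall a, a \in S -> ~~ (b <= a))].

Definition max_meet_antichain d (L : finTBLatticeType d) (b : L)
  (A At : {set L}) :=
  [/\ At \subset A, meet_antichain b At
    & forall a, a \in A -> exists2 a', a' \in At & a `&` b <= a' `&` b].

(* Main.v *)
Require Import Defs.
From HB Require Import structures.
From mathcomp Require Import all_boot all_order all_algebra.
From mathcomp Require Import reals.
Import Order.TTheory GRing.Theory Num.Theory.
Local Open Scope order_scope.

Section Aux.
Variables (R : realType) (d : Order.disp_t) (L : finTBLatticeType d) (b : L).

Lemma meet_add (a a' : L) (S : {set L}) : a \in S -> a `&` b <= a' `&` b ->
  bigmeet (a' |: S) `&` b = bigmeet S `&` b.
Proof.
move=> aS le; rewrite /bigmeet meets_setU big_set1.
have h1 : \meet_(x in S) x `&` b <= a `&` b.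
  by rewrite lexI leIr andbT leIxl // (meets_inf id aS).
have h2 : \meet_(x in S) x `&` b <= a'.
  by have := le_trans h1 le; rewrite lexI => /andP[].
by rewrite -meetA meet_r.
Qed.

Lemma nabla_remove (A : {set L}) (a a' : L) (phi : L -> R) :
  a \in A -> a' \in A -> a != a' -> a `&` b <= a' `&` b ->
  nabla A b phi = nabla (A :\ a) b phi.
Proof.
move=> aA a'A neq le; rewrite /nabla.
rewrite (bigID (fun S : {set L} => a \in S)) /=.
set F := fun S : {set L} => ((-1) ^+ #|S| * phi (bigmeet S `&` b))%R.
have -> : (\sum_(i in powerset A | a \in i) F i = 0)%R.
  pose tog (S : {set L}) := if a' \in S then S :\ a' else a' |: S.
  have togK : involutive tog.
    move=> S; rewrite /tog; case h: (a' \in S).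
      by rewrite setD11 setD1K.
    by rewrite setU11 setU1K // h.
  set s := (\sum_(i in powerset A | a \in i) F i)%R.
  have memtog S : (a \in tog S) = (a \in S).
    by rewrite /tog; case: ifP => _; rewrite !inE (negbTE neq).
  have subtog S : (tog S \subset A) = (S \subset A).
    rewrite /tog; case: ifP => h.
      apply/idP/idP => H; last by apply: subset_trans H; apply: subD1set.
      by rewrite -(setD1K h) subUset sub1set a'A.
    by rewrite subUset sub1set a'A.
  have hs : s = (- s)%R.
    rewrite {1}/s (reindex_inj (inv_inj togK)) /= /s -sumrN.
    apply: eq_big => S.
      by rewrite !powersetE subtog memtog.
    rewrite powersetE => /andP[_]; rewrite memtog => aS.
    rewrite /F /tog; case: ifP => h /=.
      have aS' : a \in S :\ a' by rewrite !inE neq aS.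
      by rewrite -(@meet_add _ _ _ aS' le) (setD1K h) (cardsD1 a' S) h exprS
        mulN1r mulNr opprK.
    rewrite cardsU1 h exprS mulN1r mulNr; congr (- (_ * phi _))%R; exact: (@meet_add _ _ _ aS le).
  have : (s *+ 2 == 0)%R by rewrite mulr2n {2}hs addrN.
  by rewrite mulrn_eq0 /= => /eqP.
rewrite add0r; apply: eq_bigl => S.
by rewrite !powersetE subsetD1.
Qed.

Lemma nabla_ind (phi : L -> R) n : forall (A At : {set L}), #|A :\: At| = n ->
  At \subset A -> (forall a, a \in A -> exists2 a', a' \in At & a `&` b <= a' `&` b) ->
  nabla A b phi = nabla At b phi.
Proof.
elim: n => [|n IH] A At hc sub dom.
  have : A :\: At = set0 by apply/eqP; rewrite -cards_eq0 hc.
  by move/eqP; rewrite setD_eq0 => sub2; rewrite (_ : A = At) //; apply/eqP; rewrite eqEsubset sub2 sub.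
have : (0 < #|A :\: At|)%N by rewrite hc.
case/card_gt0P => a; rewrite inE => /andP[naAt aA].
have [a' a'At le] := dom a aA.
have neq : a != a' by apply: contraNneq naAt => ->.
rewrite (nabla_remove _ _ _ phi aA (subsetP sub _ a'At) neq le).
apply: IH.
- have -> : (A :\ a) :\: At = (A :\: At) :\ a.
    by apply/setP => x; rewrite !inE; case: (x == a); rewrite ?andbF ?andbT.
  have := cardsD1 a (A :\: At); rewrite hc inE naAt aA /= add1n.
  by case.
- apply/subsetP => x xAt; rewrite !inE (subsetP sub _ xAt) andbT.
  by apply: contraNneq naAt => <-.
- by move=> x; rewrite inE => /andP[_ /dom].
Qed.
End Aux.

Theorem lemma2p3 (R : realType) d (L : finTBLatticeType d) (b : L)
  (A At : {set L}) :
  A != set0 ->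
  (forall a, a \in A -> ~~ (b <= a)) ->
  max_meet_antichain b A At ->
  forall phi : L -> R, nabla A b phi = nabla At b phi.
Proof.
move=> _ _ [sub _ dom] phi.
exact: (@nabla_ind R d L b phi _ A At erefl sub dom).
Qed.
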